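(* For $s\in\mathbb{N}$ let $\mathcal{F}_s$ be the set of binary cubic forms $f=(a,b,c,d)$ over $\mathbb{F}_q[t]$ such that $\deg(D(f))=s$, $\deg(a)\le s/4$, $\deg(b)\le s/4$, $\deg(ad)\le s/2$, $\deg(bc)\le s/2$, and $\mathrm{sgn}(a)\in S$. Then, as $s\to\infty$, $\#\mathcal{F}_s\le \frac{q^3}{32}s^2q^s+O(sq^s)$ if $s$ is odd, and $\#\mathcal{F}_s\le\frac{q^4}{32}s^2q^s+O(sq^s)$ if $s$ is even.
   Context: $q$ is a prime power with $\gcd(q,6)=1$; $\mathrm{sgn}(H)$ is the leading coefficient of $H\in\mathbb{F}_q[t]$. A binary cubic form $(a,b,c,d)$ is $ax^3+bx^2y+cxy^2+dy^3$ over $\mathbb{F}_q[t]$ with discriminant $D(f)=18abcd+b^2c^2-4ac^3-4b^3d-27a^2d^2$, assumed irreducible (so $ad\neq0$). Fix a primitive root $h$ of $\mathbb{F}_q^*$ and $S=\{h^i:0\le i\le(q-3)/2\}$. *)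

(* Defs.v *)
From HB Require Import structures.
From mathcomp Require Import all_boot all_order all_algebra all_field.
Set Implicit Arguments. Unset Strict Implicit. Unset Printing Implicit Defensive.
Import Order.TTheory GRing.Theory Num.Theory.
Local Open Scope ring_scope.

(* A binary cubic form (a,b,c,d) = a x^3 + b x^2 y + c x y^2 + d y^3 over F_q[t]. *)
Definition cubic_form (F : finFieldType) : Type :=
  ({poly F} * {poly F} * {poly F} * {poly F})%type.

Definition cf_a (F : finFieldType) (f : cubic_form F) : {poly F} := f.1.1.1.
Definition cf_b (F : finFieldType) (f : cubic_form F) : {poly F} := f.1.1.2.
Definition cf_c (F : finFieldType) (f : cubic_form F) : {poly F} := f.1.2.
Definition cf_d (F : finFieldType) (f : cubic_form F) : {poly F} := f.2.

Definition disc (F : finFieldType) (f : cubic_form F) : {poly F} :=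
  let a := cf_a f in let b := cf_b f in let c := cf_c f in let d := cf_d f in
  18%:R * a * b * c * d + b ^+ 2 * c ^+ 2 - 4%:R * a * c ^+ 3
  - 4%:R * b ^+ 3 * d - 27%:R * a ^+ 2 * d ^+ 2.

Definition dehom (F : finFieldType) (f : cubic_form F) : {poly {fraction {poly F}}} :=
  (tofrac (cf_a f))%:P * 'X^3 + (tofrac (cf_b f))%:P * 'X^2
  + (tofrac (cf_c f))%:P * 'X + (tofrac (cf_d f))%:P.

(* f irreducible as a binary cubic form over F_q(t): f has degree 3 in x (a <> 0)
   and f(x,1) is an irreducible polynomial over F_q(t). *)
Definition irreducible_form (F : finFieldType) (f : cubic_form F) : Prop :=
  cf_a f != 0 /\ irreducible_poly (dehom f).

Definition inS (F : finFieldType) (h x : F) : Prop :=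
  exists i : nat, (i <= (#|F| - 3) %/ 2)%N /\ x = h ^+ i.

(* deg p <= s/k, with deg 0 = -infinity (so the condition is vacuous for p = 0) *)
Definition deg_le_frac (F : finFieldType) (p : {poly F}) (k s : nat) : bool :=
  (k * (size p).-1 <= s)%N.

Definition in_Fs (F : finFieldType) (h : F) (s : nat) (f : cubic_form F) : Prop :=
  irreducible_form f /\
  size (disc f) = s.+1 /\
  deg_le_frac (cf_a f) 4 s /\ deg_le_frac (cf_b f) 4 s /\
  deg_le_frac (cf_a f * cf_d f) 2 s /\ deg_le_frac (cf_b f * cf_c f) 2 s /\
  inS h (lead_coef (cf_a f)).

(* Main.v *)
From Stdlib Require Import Lia Ring Arith.
Require Import Defs.
From HB Require Import structures.
From mathcomp Require Import all_boot all_order all_algebra all_field all_fingroup all_solvable.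
Import Order.TTheory GRing.Theory Num.Theory.
Local Open Scope ring_scope.

Lemma two_neq0 (F : finFieldType) : coprime #|F| 6 -> (2%:R : F) != 0.
Proof.
move=> cop; apply/eqP=> H2.
have cop2 : coprime #|F| 2 by apply: coprime_dvdr cop.
rewrite coprimen2 in cop2.
have Hq : (#|F|%:R : F) = 0.
  by rewrite -FinRing.zmodXgE -cardsT expg_cardG // inE.
move: Hq; rewrite -(odd_double_half #|F|) cop2 -mul2n natrD natrM H2 mul0r addr0.
by move/eqP; rewrite oner_eq0.
Qed.

Lemma four_neq0 (F : finFieldType) : coprime #|F| 6 -> (4%:R : {poly F}) != 0.
Proof.
move=> cop; rewrite -polyC_natr polyC_eq0 (_ : 4 = 2 * 2)%N // natrM mulf_eq0.
by rewrite orbb two_neq0.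
Qed.

Lemma size_c_b0 (F : finFieldType) (f : cubic_form F) (s : nat) :
  coprime #|F| 6 -> cf_b f = 0 -> cf_a f != 0 ->
  (2 * (size (cf_a f * cf_d f)%R).-1 <= s)%N -> size (disc f) = s.+1 ->
  (size (cf_c f) <= (s %/ 2).+1)%N.
Proof.
move=> cop Hb Ha Had Hd.
rewrite leqNgt; apply/negP=> Hc.
set a := cf_a f in Ha Had Hd *; set c := cf_c f in Hc *; set d := cf_d f in Had Hd.
have c0 : c != 0 by rewrite -size_poly_gt0 (leq_trans _ Hc).
have E : disc f = - (4%:R * a * c ^+ 3) + - (27%:R * a ^+ 2 * d ^+ 2).
  rewrite /disc Hb -/a -/c -/d.
  rewrite !(mulr0, mul0r, expr0n) /= !(add0r, sub0r, subr0, mul0r).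
  by [].
have sY : (size (27%:R * a ^+ 2 * d ^+ 2)%R <= s.+1)%N.
  rewrite -mulrA -exprMn.
  apply: (leq_trans (size_polyMleq _ _)).
  have h27 : (size (27%:R : {poly F}) <= 1)%N by rewrite -polyC_natr size_polyC_leq1.
  apply: (@leq_trans (size ((a * d) ^+ 2)%R)).
    by case: (size _) h27 => [|[|//]] _ /=; rewrite ?leq_pred.
  apply: (leq_trans (size_poly_exp_leq _ _)).
  by rewrite ltnS mulnC.
have sX : (s.+1 < size (4%:R * a * c ^+ 3)%R)%N.
  rewrite -mulrA size_mul ?four_neq0 // ?mulf_neq0 ?expf_neq0 //.
  have f4 : (4%:R : F) != 0 by rewrite -polyC_eq0 polyC_natr four_neq0.
  rewrite -polyC_natr size_polyC f4 /=.
  rewrite ?add1n /= size_mul ?expf_neq0 //.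
  have e3 := size_exp c 3.
  have Hs : (s < (s %/ 2)%N.+1 * 2)%N by apply: ltn_ceil.
  have pa : (0 < size a)%N by rewrite size_poly_gt0.
  have pc3 : (0 < size (c ^+ 3)%R)%N by rewrite size_poly_gt0 expf_neq0.
  move: e3 Hc Hs pa pc3.
  move: (size (c ^+ 3)%R) (size c) (size a) (s %/ 2)%N => z y x w.
  move=> e3 /ssrnat.leP Hc /ssrnat.leP Hs /ssrnat.leP pa /ssrnat.leP pc3; apply/ssrnat.leP.
  rewrite -!plusE -!multE in e3 Hc Hs pa pc3 *.
  lia.
move: Hd; rewrite E size_polyDl ?size_polyN; first by move=> e; rewrite e ltnn in sX.
by rewrite ?size_polyN (leq_ltn_trans sY).
Qed.

Local Open Scope nat_scope.
Lemma arith (q s : nat) : (1 < q)%N -> (0 < s)%N ->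
  (32 * ((s %/ 4).+1 ^ 2 * ((q - 3) %/ 2).+1 * q ^ ((s %/ 2).+1 + (s %/ 2).+2)) <=
   (if odd s then q ^ 3 else q ^ 4) * s ^ 2 * q ^ s + 32 * (q ^ 4 * s * q ^ s))%N.
Proof.
move=> q1 s0.
set m := (s %/ 4)%N; set H := (s %/ 2)%N; set K := ((q - 3) %/ 2).+1.
set X := (if odd s then q ^ 3 else q ^ 4)%N.
have h1 : (4 * m.+1 <= s + 4)%N.
  have := leq_divM s 4; rewrite -/m => /ssrnat.leP h; apply/ssrnat.leP.
  rewrite -!plusE -!multE in h *; lia.
have h2 : (2 * K <= q)%N.
  have := leq_divM (q - 3) 2 => /ssrnat.leP h.
  move/ssrnat.leP: q1 => q1'; apply/ssrnat.leP.
  rewrite /K -?plusE -?multE -?minusE in h q1' *; lia.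
have hE : (q ^ (H.+1 + H.+2) * q = X * q ^ s)%N.
  rewrite -expnSr /X; have := divn_eq s 2; rewrite modn2 -/H.
  case: (odd s) => /= e; rewrite -expnD; congr (q ^ _);
  rewrite -!plusE -!multE in e *; lia.
have hX : (X <= q ^ 4)%N.
  rewrite /X; case: (odd s) => //; rewrite (_ : 4 = 3 + 1)%N // expnD leq_pmulr //.
  by rewrite expn1 ltnW.
have step1 : (32 * (m.+1 ^ 2 * K * q ^ (H.+1 + H.+2)) <= (s + 4) ^ 2 * (X * q ^ s))%N.
  rewrite -hE (_ : 32 * (m.+1 ^ 2 * K * q ^ (H.+1 + H.+2)) =
      (4 * m.+1) ^ 2 * (2 * K) * q ^ (H.+1 + H.+2))%N; last first.
    by rewrite expnMn !mulnA (mulnC _ 2) !mulnA.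
  set Q := q ^ (H.+1 + H.+2).
  rewrite (mulnC Q q) (mulnA ((s + 4) ^ 2)) leq_mul2r; apply/orP; right; apply: leq_mul => //.
  by rewrite leq_exp2r.
apply: (leq_trans step1).
have h3 : ((s + 4) ^ 2 <= s ^ 2 + 24 * s)%N.
  move/ssrnat.leP: s0 => s0'; apply/ssrnat.leP.
  rewrite !expnS !expn0 !muln1 -!plusE -!multE in s0' *; nia.
apply: (leq_trans (leq_mul h3 (leqnn _))).
rewrite mulnDl; apply: leq_add.
  rewrite mulnA (mulnC (s ^ 2) X) -mulnA; exact: leqnn.
clear hE step1; move: hX; move: (q ^ s) (q ^ 4) X => P Y Z hZ.
have -> : (24 * s * (Z * P) = 24 * (Z * (s * P)))%N by rewrite -!multE; ring.
have -> : (32 * (Y * s * P) = 32 * (Y * (s * P)))%N by rewrite -!multE; ring.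
by apply: leq_mul => //; apply: leq_mul.
Qed.

Local Open Scope ring_scope.

Definition dec (F : finFieldType) (h : F) (H m K : nat)
  (x : 'I_m.+1 * 'I_K * (H.+1).-tuple F * 'I_m.+1 * (H.+2).-tuple F) : cubic_form F :=
  let i := (x.1.1.1.1 : nat) in let k := (x.1.1.1.2 : nat) in
  let t := (x.1.1.2 : seq F) in let j := (x.1.2 : nat) in let u := (x.2 : seq F) in
  ((( \poly_(n < i.+1) (if n == i then h ^+ k else nth 0 t n),
      \poly_(n < j.+1) nth 0 u n),
     \poly_(n < H.+1 - j) nth 0 u (j.+1 + n)),
   \poly_(n < H.+1 - i) nth 0 t (i + n)).

Lemma size_bound (F : finFieldType) (a d : {poly F}) (i H s : nat) :
  a != 0 -> size a = i.+1 -> (s < H.+1 * 2)%N ->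
  (2 * (size (a * d)%R).-1 <= s)%N -> (size d <= H.+1 - i)%N.
Proof.
move=> a0 sa Hs Had.
have [->|d0] := eqVneq d 0; first by rewrite size_poly0.
move: Had; rewrite size_mul // sa.
have : (0 < size d)%N by rewrite size_poly_gt0.
move: (size d) => z /ssrnat.leP z0 /ssrnat.leP h1; apply/ssrnat.leP.
move/ssrnat.leP: Hs => Hs.
rewrite -?plusE -?multE -?minusE in z0 h1 Hs *; lia.
Qed.

Lemma in_codom (F : finFieldType) (h : F) (s : nat) (f : cubic_form F) :
  coprime #|F| 6 -> in_Fs h s f ->
  f \in codom (@dec F h (s %/ 2)%N (s %/ 4)%N ((#|F| - 3) %/ 2).+1).
Proof.
move=> cop [[Ha _] [Hdisc [Ha4 [Hb4 [Had [Hbc Hs]]]]]].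
have Hc0 := @size_c_b0 F f s cop.
move: Ha Hdisc Ha4 Hb4 Had Hbc Hs Hc0.
case: f => [[[a b] c] d]; rewrite /cf_a /cf_b /cf_c /cf_d /deg_le_frac /=.
move=> Ha Hdisc Ha4 Hb4 Had Hbc [k [hk Hlead]] Hc0.
set H := (s %/ 2)%N; set m := (s %/ 4)%N.
have Hs2 : (s < H.+1 * 2)%N by apply: ltn_ceil.
set i := (size a).-1; set j := (size b).-1.
have hsa : size a = i.+1 by rewrite prednK // size_poly_gt0.
have hi : (i < m.+1)%N by rewrite ltnS leq_divRL // mulnC.
have hj : (j < m.+1)%N by rewrite ltnS leq_divRL // mulnC.
have iH : (i <= H)%N.
  rewrite /H leq_divRL // (leq_trans _ Ha4) // mulnC leq_mul2r; apply/orP; right; by [].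
have jH : (j <= H)%N.
  rewrite /H leq_divRL // (leq_trans _ Hb4) // mulnC leq_mul2r; apply/orP; right; by [].
have hsd : (size d <= H.+1 - i)%N by exact: (@size_bound _ a d i H s Ha hsa Hs2 Had).
have hsb : (size b <= j.+1)%N by rewrite /j; case: (size b).
have hsc : (size c <= H.+1 - j)%N.
  have [b0|b0] := eqVneq b 0.
    rewrite /j b0 size_poly0 /= subn0; exact: (Hc0 b0 Ha Had Hdisc).
  have hsb' : size b = j.+1 by rewrite prednK // size_poly_gt0.
  exact: (@size_bound _ b c j H s b0 hsb' Hs2 Hbc).
have hk' : (k < ((#|F| - 3) %/ 2).+1)%N by [].
pose g1 := fun n => if (n < i)%N then a`_n else d`_(n - i).
pose g2 := fun n => if (n < j.+1)%N then b`_n else c`_(n - j.+1).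
have [t1 nt1] : exists t1 : (H.+1).-tuple F, forall n, (n < H.+1)%N -> nth 0 (t1 : seq F) n = g1 n.
  by exists (@Tuple H.+1 F (mkseq g1 H.+1) (introT eqP (size_mkseq g1 H.+1))) => n hn /=; rewrite nth_mkseq.
have [t2 nt2] : exists t2 : (H.+2).-tuple F, forall n, (n < H.+2)%N -> nth 0 (t2 : seq F) n = g2 n.
  by exists (@Tuple H.+2 F (mkseq g2 H.+2) (introT eqP (size_mkseq g2 H.+2))) => n hn /=; rewrite nth_mkseq.
apply/codomP; exists ((((Ordinal hi, Ordinal hk'), t1), Ordinal hj), t2).
rewrite /dec /=.
congr (((_, _), _), _); apply/polyP => n; rewrite coef_poly.
- case: ltnP => hn.
    case: eqVneq => [->|ni].
      by rewrite -Hlead /lead_coef hsa.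
    have ni' : (n < i)%N by rewrite ltn_neqAle ni -ltnS.
    rewrite nt1; first by rewrite /g1 /= ni'.
    by apply: (leq_trans ni'); exact: leqW.
  by rewrite nth_default // hsa.
- case: ltnP => hn.
    rewrite nt2; first by rewrite /g2 /= hn.
    by apply: (leq_trans hn); rewrite ltnS; exact: leqW.
  by rewrite nth_default // (leq_trans hsb hn).
- case: ltnP => hn.
    rewrite nt2.
      by rewrite /g2 /= ltnNge leq_addr /= addKn.
    move/ssrnat.leP: hn => hn'; apply/ssrnat.leP.
    rewrite -?plusE -?minusE in hn' *; lia.
  by rewrite nth_default // (leq_trans hsc hn).
- case: ltnP => hn.
    rewrite nt1.
      by rewrite /g1 /= ltnNge leq_addr /= addKn.
    move/ssrnat.leP: hn => hn'; apply/ssrnat.leP.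
    rewrite -?plusE -?minusE in hn' *; lia.
  by rewrite nth_default // (leq_trans hsd hn).
Qed.

Lemma rat_step (X q s L : nat) :
  (32 * L <= X * s ^ 2 * q ^ s + 32 * (q ^ 4 * s * q ^ s))%N ->
  (L%:R : rat) <= (X%:R : rat) / 32%:R * s%:R ^+ 2 * q%:R ^+ s
     + (q ^ 4)%N%:R * s%:R * q%:R ^+ s.
Proof.
move=> H.
have p32 : (0 : rat) < 32%:R by rewrite ltr0n.
have -> : (X%:R : rat) / 32%:R * s%:R ^+ 2 * q%:R ^+ s
     + (q ^ 4)%N%:R * s%:R * q%:R ^+ s
    = (X * s ^ 2 * q ^ s + (q ^ 4 * s * q ^ s) * 32)%N%:R / 32%:R.
  rewrite natrD !natrM !natrX mulrDl mulfK ?(gtr_eqF p32) //; congr (_ + _).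
  by rewrite -!mulrA; congr (_ * _); rewrite mulrC -!mulrA; congr (_ * _); rewrite mulrC.
rewrite ler_pdivlMr // -natrM ler_nat mulnC.
by rewrite (mulnC _ 32).
Qed.

Theorem mainTheorem14 (F : finFieldType) (h : F) :
  coprime #|F| 6 ->
  (#|F|.-1).-primitive_root h ->
  exists (M : rat) (N : nat), forall s : nat, (N <= s)%N ->
    forall l : seq (cubic_form F), uniq l -> (forall f, f \in l -> in_Fs h s f) ->
      (size l)%:R <=
        (if odd s then (#|F|%:R ^+ 3 : rat) else #|F|%:R ^+ 4) / 32%:R
          * s%:R ^+ 2 * #|F|%:R ^+ s
        + M * s%:R * #|F|%:R ^+ s.
Proof.
move=> cop _.
exists ((#|F| ^ 4)%N%:R), 1%N => s s1 l ul Hl.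
have q1 : (1 < #|F|)%N := finNzRing_gt1 F.
have sub : {subset l <= codom (@dec F h (s %/ 2)%N (s %/ 4)%N ((#|F| - 3) %/ 2).+1)}.
  by move=> f /Hl; exact: in_codom.
have Hsz := uniq_leq_size ul sub.
rewrite size_codom !card_prod !card_ord !card_tuple in Hsz.
have Hkey : (32 * size l <= (if odd s then #|F| ^ 3 else #|F| ^ 4) * s ^ 2 * #|F| ^ s
               + 32 * (#|F| ^ 4 * s * #|F| ^ s))%N.
  apply: (leq_trans _ (arith _ _ q1 s1)); rewrite leq_mul2l /=.
  apply: (leq_trans Hsz).
  rewrite expnD.
  set m := (s %/ 4)%N; set K := ((#|F| - 3) %/ 2).+1.
  set A := (#|F| ^ (s %/ 2).+1)%N; set B := (#|F| ^ (s %/ 2).+2)%N.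
  have -> : (m.+1 * K * A * m.+1 * B = m.+1 ^ 2 * K * (A * B))%N.
    rewrite !expnS expn0 muln1 -!multE; ring.
  by [].
have E : (if odd s then (#|F|%:R ^+ 3 : rat) else #|F|%:R ^+ 4)
    = (if odd s then #|F| ^ 3 else #|F| ^ 4)%N%:R by case: (odd s); rewrite natrX.
rewrite E; exact: rat_step.
Qed.
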